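(* Let $G$ be a finite abelian group of order $n$, let $\hat G=\{\psi_1,\dots,\psi_n\}$ be its dual group, and for $\chi\in\hat G^n$ let $a_i$ be the number of coordinates of $\chi$ equal to $\psi_i$ (so $a_1+\cdots+a_n=n$). Let $H=H(\chi)=\frac1n\log\binom{n}{a_1,\dots,a_n}$. If $H\ge(\log n)^{-100}$ then \[ H=\Big(1+O\Big(\frac{\log\log n}{\log n}\Big)\Big)\sum_{i=1}^n\frac{a_i}{n}\log\frac{n}{a_i}, \] where terms with $a_i=0$ are interpreted as $0$ and the implied constant is absolute.
   Context: $\binom{n}{a_1,\dots,a_n}=\frac{n!}{a_1!\cdots a_n!}$ is the multinomial coefficient. *)

(* Defs.v *)
From mathcomp Require Import all_boot all_order all_algebra all_fingroup all_solvable all_field all_character.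
From Stdlib Require Import Reals.
Set Implicit Arguments. Unset Strict Implicit. Unset Printing Implicit Defensive.

(* The dual group of a finite abelian group G is represented by the
   irreducible (= linear, since G is abelian) characters irr G, indexed by
   Iirr G; for abelian G there are exactly #|G| of them. *)

Definition counts (gT : finGroupType) (G : {group gT}) (n : nat)
  (chi : 'I_n -> Iirr G) (i : Iirr G) : nat := #|[set j | chi j == i]|.

Definition multinom (gT : finGroupType) (G : {group gT}) (n : nat)
  (a : Iirr G -> nat) : nat := n`! %/ \prod_(i : Iirr G) (a i)`!.

Definition Hent (gT : finGroupType) (G : {group gT}) (n : nat)
  (chi : 'I_n -> Iirr G) : R :=
  (/ INR n * ln (INR (@multinom gT G n (counts chi))))%R.

Definition Sent (gT : finGroupType) (G : {group gT}) (n : nat)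
  (chi : 'I_n -> Iirr G) : R :=
  \big[Rplus/0%R]_(i : Iirr G)
     (if counts chi i == 0%N then 0%R
      else (INR (counts chi i) / INR n * ln (INR n / INR (counts chi i)))%R).

(* Main.v *)
Require Import Defs.
From mathcomp Require Import all_boot all_order all_algebra all_fingroup all_solvable all_field all_character.
From Stdlib Require Import Reals.
From Stdlib Require Import Lra.
From HB Require Import structures.
From mathcomp Require Import zify.

Local Notation "m ^ n" := (expn m n) : nat_scope.

Lemma prod_fact_dvd (I : Type) (r : seq I) (a : I -> nat) :
  (\prod_(i <- r) (a i)`! %| (\sum_(i <- r) a i)`!)%nat.
Proof.
elim: r => [|x r IH]; first by rewrite !big_nil.
rewrite !big_cons.
have := bin_fact (leq_addr (\sum_(i <- r) a i) (a x)).
rewrite addKn => <-.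
by rewrite dvdn_mull // dvdn_mul.
Qed.

Lemma multinom_le (I : Type) (r : seq I) (a : I -> nat) :
  ((\sum_(i <- r) a i)`! * \prod_(i <- r) (a i) ^ (a i) <=
   (\sum_(i <- r) a i) ^ (\sum_(i <- r) a i) * \prod_(i <- r) (a i)`!)%nat.
Proof.
elim: r => [|x r IH]; first by rewrite !big_nil.
rewrite !big_cons.
set m := \sum_(i <- r) a i in IH *.
set Q := \prod_(i <- r) a i ^ a i in IH *.
set P := \prod_(i <- r) (a i)`! in IH *.
have := bin_fact (leq_addr m (a x)).
rewrite addKn => <-.
set N := a x + m.
have hb : ('C(N, a x) * a x ^ a x * m ^ m <= N ^ N)%nat.
  rewrite {2}/N addnC expnDn.
  have hi : (a x < N.+1)%nat by rewrite ltnS leq_addr.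
  rewrite (bigD1 (Ordinal hi)) //=.
  apply: leq_trans (leq_addr _ _).
  have -> : (N - a x = m)%nat by rewrite /N addKn.
  by rewrite -mulnA (mulnC (a x ^ a x)).
have e1 : ('C(N, a x) * ((a x)`! * m`!) * (a x ^ a x * Q)
   = ('C(N, a x) * (a x)`! * a x ^ a x) * (m`! * Q))%nat.
  nia.
rewrite e1.
apply: leq_trans (leq_mul (leqnn _) IH) _.
have e2 : ('C(N, a x) * (a x)`! * a x ^ a x * (m ^ m * P)
   = ('C(N, a x) * a x ^ a x * m ^ m) * ((a x)`! * P))%nat.
  nia.
rewrite e2.
exact: leq_mul hb (leqnn _).
Qed.
Open Scope R_scope.

Lemma ln_le_sub1 x : 0 < x -> ln x <= x - 1.
Proof. move=> hx; have := exp_ineq1_le (ln x); rewrite exp_ln //; lra. Qed.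

Lemma ln_step_up x : 0 < x -> ln (x + 1) - ln x <= / x.
Proof.
move=> hx.
have h1 : 0 < (x + 1) / x by apply: Rdiv_lt_0_compat; lra.
have -> : x + 1 = x * ((x + 1) / x) by field; lra.
rewrite ln_mult //.
have := ln_le_sub1 _ h1.
have -> : (x + 1) / x - 1 = / x by field; lra.
lra.
Qed.

Lemma ln_step_low x : 0 < x -> / (x + 1) <= ln (x + 1) - ln x.
Proof.
move=> hx.
have h1 : 0 < x / (x + 1) by apply: Rdiv_lt_0_compat; lra.
have -> : x = (x + 1) * (x / (x + 1)) by field; lra.
rewrite ln_mult; try lra.
have := ln_le_sub1 _ h1.
have -> : (x + 1) * (x / (x + 1)) + 1 = x + 1 + 1 - 1 by field; lra.
have -> : x / (x + 1) - 1 = - / (x + 1) by field; lra.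
have -> : x + 1 + 1 - 1 = x + 1 by ring.
lra.
Qed.

Lemma INR_pos (m : nat) : (0 < m)%nat -> 0 < INR m.
Proof. by move=> h; apply: lt_0_INR; apply/ltP. Qed.

Definition Lf (m : nat) := ln (INR m`!).

Lemma Lf0 : Lf 0 = 0.
Proof. by rewrite /Lf /= ln_1. Qed.

Lemma LfS m : Lf m.+1 = ln (INR m + 1) + Lf m.
Proof.
rewrite /Lf factS mult_INR ln_mult; first by rewrite S_INR.
  by apply: INR_pos.
by apply: INR_pos; apply: fact_gt0.
Qed.

Definition rr (m : nat) := Lf m - INR m * ln (INR m) + INR m.

Lemma rr_step m : rr m <= rr m.+1.
Proof.
rewrite /rr LfS S_INR.
case: m => [|m].
  rewrite /= Rmult_0_l; lra.
have hx : 0 < INR m.+1 by apply: INR_pos.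
have h := ln_step_up _ hx.
set x := INR m.+1 in hx h *.
have : x * (ln (x + 1) - ln x) <= x * / x by apply: Rmult_le_compat_l; lra.
rewrite Rinv_r; last lra.
move=> h2; nra.
Qed.

Lemma rr_mono m k : rr m <= rr (m + k).
Proof.
elim: k => [|k IH]; first by rewrite addn0; lra.
rewrite addnS; apply: Rle_trans IH (rr_step _).
Qed.

Definition ee (b : nat) := if b == 0%nat then 0 else 1 + ln (INR b).

Lemma Lf_upper b : Lf b <= INR b * ln (INR b) - INR b + ee b.
Proof.
case: b => [|b]; first by rewrite Lf0 /ee /=; lra.
elim: b => [|b IH].
  by rewrite /ee /= /Lf /= ln_1; lra.
have e1 : forall k, ee k.+1 = 1 + ln (INR k.+1) by [].
rewrite e1 in IH *; rewrite e1.
rewrite LfS (S_INR b.+1).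
have hx : 0 < INR b.+1 by apply: INR_pos.
have h := ln_step_low _ hx.
set x := INR b.+1 in IH hx h *.
have : (x + 1) * / (x + 1) <= (x + 1) * (ln (x + 1) - ln x)
  by apply: Rmult_le_compat_l; lra.
rewrite Rinv_r; last lra.
move=> h2; nra.
Qed.
Lemma ln_le a b : 0 < a -> a <= b -> ln a <= ln b.
Proof.
move=> ha [hab|->]; last lra.
by apply: Rlt_le; apply: ln_increasing.
Qed.
Lemma ln3_gt1 : 1 < ln 3.
Proof.
have h1 : (10/9)^10 < 3 by simpl; lra.
have h2 : 0 < (10/9)^10 by apply: pow_lt; lra.
have h3 : ln ((10/9)^10) < ln 3 by apply: ln_increasing.
rewrite ln_pow in h3; last lra.
have h4 : ln (9/10) <= 9/10 - 1 by apply: ln_le_sub1; lra.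
replace (10/9) with (/ (9/10)) in h3 by field.
rewrite ln_Rinv in h3; last lra.
simpl in h3; lra.
Qed.
Lemma term_bound (b n : nat) : (1 <= b)%nat -> (2 * b <= n)%nat ->
  ln (INR n) * ee b <= 40 * (INR b * (ln (INR n) - ln (INR b))).
Proof.
move=> hb hbn.
have -> : ee b = 1 + ln (INR b) by rewrite /ee; case: b hb hbn.
have hx : 1 <= INR b by apply: (le_INR 1); apply/leP.
have hy : 2 * INR b <= INR n.
  have := le_INR _ _ (elimT leP hbn); rewrite mult_INR //.
set x := INR b in hx hy *; set y := INR n in hy *.
have hl : 0 <= ln x by rewrite -ln_1; apply: ln_le; lra.
have hL : 0 <= ln y by rewrite -ln_1; apply: ln_le; lra.
have hlx : ln x <= x - 1 by apply: ln_le_sub1; lra.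
set l := ln x in hl hlx *; set L := ln y in hL *.
case: (Rle_lt_dec (x * x) y) => hxy.
- have : ln (x * x) <= L by apply: ln_le; nra.
  rewrite ln_mult; try lra.
  move=> h2; rewrite -/l in h2.
  have p0 : 0 <= (1 + l) * L by apply: Rmult_le_pos; lra.
  have p1 : 0 <= (x - (1 + l)) * (L - l) by apply: Rmult_le_pos; lra.
  have p2 : 0 <= (1 + l) * (L / 2 - l) by apply: Rmult_le_pos; lra.
  nra.
- have : L < ln (x * x) by apply: ln_increasing; lra.
  rewrite ln_mult; try lra.
  move=> h2; rewrite -/l in h2.
  have h3 : ln 2 <= ln (y / x) by apply: ln_le; [lra | apply: (Rmult_le_reg_r x); [lra|]; field_simplify; lra].
  rewrite /Rdiv ln_mult in h3; try (apply: Rinv_0_lt_compat); try lra.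
  rewrite ln_Rinv in h3; try lra.
  rewrite -/L -/l in h3.
  have h4 := ln_lt_2.
  have hs := sqrt_lt_R0 x ltac:(lra).
  have hss : sqrt x * sqrt x = x by apply: sqrt_sqrt; lra.
  have hs1 : 1 <= sqrt x by rewrite -sqrt_1; apply: sqrt_le_1_alt; lra.
  have hls : l <= 2 * (sqrt x - 1).
    have : l = 2 * ln (sqrt x) by rewrite /l -{1}hss ln_mult; lra.
    have := ln_le_sub1 _ hs; lra.
  set s := sqrt x in hs hss hs1 hls.
  rewrite -hss.
  have p1 : 0 <= (2 * l - L) * (1 + l) by apply: Rmult_le_pos; lra.
  have p2 : 0 <= (2 * s - l) * (1 + l) by apply: Rmult_le_pos; lra.
  have p2' : 0 <= (2 * s) * (2 * s - l) by apply: Rmult_le_pos; lra.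
  have p3 : 0 <= (s * s) * (L - l - / 2) by apply: Rmult_le_pos; [nra|lra].
  have p4 : 0 <= s * (s - 1) by apply: Rmult_le_pos; lra.
  nra.
Qed.
Lemma RplusA' : associative Rplus.
Proof. by move=> x y z; rewrite Rplus_assoc. Qed.
HB.instance Definition _ := Monoid.isComLaw.Build R 0 Rplus RplusA' Rplus_comm Rplus_0_l.

Section Sums.
Variables (I : Type) (r : seq I) (P : pred I).

Lemma sumR_add (F G : I -> R) :
  \big[Rplus/0]_(i <- r | P i) (F i + G i) =
  \big[Rplus/0]_(i <- r | P i) F i + \big[Rplus/0]_(i <- r | P i) G i.
Proof. exact: big_split. Qed.

Lemma sumR_scal c (F : I -> R) :
  \big[Rplus/0]_(i <- r | P i) (c * F i) = c * \big[Rplus/0]_(i <- r | P i) F i.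
Proof.
symmetry; apply: (big_endo (fun x => c * x)).
  by move=> x y; rewrite Rmult_plus_distr_l.
by rewrite Rmult_0_r.
Qed.

Lemma sumR_sub (F G : I -> R) :
  \big[Rplus/0]_(i <- r | P i) (F i - G i) =
  \big[Rplus/0]_(i <- r | P i) F i - \big[Rplus/0]_(i <- r | P i) G i.
Proof.
rewrite /Rminus sumR_add; congr (_ + _).
symmetry; apply: (big_endo Ropp).
  by move=> x y; rewrite Ropp_plus_distr.
by rewrite Ropp_0.
Qed.

Lemma sumR_le (F G : I -> R) : (forall i, P i -> F i <= G i) ->
  \big[Rplus/0]_(i <- r | P i) F i <= \big[Rplus/0]_(i <- r | P i) G i.
Proof.
move=> h; apply: (big_ind2 (fun x y => x <= y)) => //; first lra.
by move=> *; apply: Rplus_le_compat.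
Qed.

Lemma INR_sum (a : I -> nat) :
  INR (\sum_(i <- r | P i) a i)%nat = \big[Rplus/0]_(i <- r | P i) INR (a i).
Proof. apply: (big_morph INR) => //; exact: plus_INR. Qed.

Lemma ln_INR_prod (F : I -> nat) : (forall i, 0 < F i)%nat ->
  ln (INR (\prod_(i <- r) F i)%nat) = \big[Rplus/0]_(i <- r) ln (INR (F i)).
Proof.
move=> hF; elim: r => [|x s IH]; first by rewrite !big_nil /= ln_1.
rewrite !big_cons mult_INR ln_mult ?IH //; apply: INR_pos => //.
exact: prodn_gt0.
Qed.
End Sums.

Lemma INR_expn (m k : nat) : INR (m ^ k)%nat = INR m ^ k.
Proof.
elim: k => [|k IH]; first by rewrite expn0.
by rewrite expnS mult_INR IH.
Qed.

Lemma main_bound (I : finType) (a : I -> nat) (n : nat) (i0 : I) :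
  (3 <= n)%nat -> (\sum_i a i)%nat = n -> (forall i, a i <= a i0)%nat ->
  let Hn := ln (INR (n`! %/ \prod_i (a i)`!)%nat) in
  let S := \big[Rplus/0]_i (if a i == 0%nat then 0
              else INR (a i) / INR n * ln (INR n / INR (a i))) in
  Hn <= INR n * S /\ INR n * S - Hn <= 40 / ln (INR n) * (INR n * S).
Proof.
move=> hn hsum hmax Hn S.
have hn0 : 0 < INR n by apply: INR_pos; lia.
have hln : 1 < ln (INR n).
  apply: Rlt_le_trans ln3_gt1 _; apply: ln_le; first lra.
  have h3 : INR 3 <= INR n by apply: le_INR; apply/leP.
  simpl in h3; lra.
pose U i := INR (a i) * ln (INR n) - INR (a i) * ln (INR (a i)).
have hS : INR n * S = \big[Rplus/0]_i U i.
  rewrite /S -sumR_scal; apply: eq_bigr => i _; rewrite /U.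
  case: eqP => [->|ha]; first by rewrite /= !Rmult_0_l; lra.
  have hai : 0 < INR (a i) by apply: INR_pos; lia.
  rewrite /Rdiv ln_mult ?ln_Rinv //; last by apply: Rinv_0_lt_compat.
  field; lra.
pose K := \big[Rplus/0]_i (INR (a i) * ln (INR (a i))).
have hsumR : \big[Rplus/0]_i INR (a i) = INR n by rewrite -INR_sum hsum.
have hS2 : INR n * S = INR n * ln (INR n) - K.
  rewrite hS /U sumR_sub; congr (_ - _).
  under eq_bigr => i _ do rewrite Rmult_comm.
  by rewrite sumR_scal hsumR Rmult_comm.
have hdiv := @prod_fact_dvd _ (index_enum I) a.
rewrite hsum in hdiv.
have hpos : forall i, (0 < (a i)`!)%nat by move=> i; apply: fact_gt0.
have hHn : Hn = Lf n - \big[Rplus/0]_i Lf (a i).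
  have e : INR n`! = INR (n`! %/ \prod_i (a i)`!)%nat * INR (\prod_i (a i)`!)%nat
    by rewrite -mult_INR; congr INR; symmetry; exact: divnK hdiv.
  rewrite /Hn /Lf e ln_mult.
  - rewrite ln_INR_prod //; lra.
  - apply: INR_pos; rewrite divn_gt0 ?prodn_gt0 //; exact: dvdn_leq (fact_gt0 _) hdiv.
  - by apply: INR_pos; rewrite prodn_gt0.
split.
-
  have hle := @multinom_le _ (index_enum I) a.
  rewrite hsum in hle.
  have := le_INR _ _ (elimT leP hle).
  rewrite !mult_INR => h.
  have hQ : 0 < INR (\prod_(i <- index_enum I) a i ^ a i)%nat.
    apply: INR_pos; apply: prodn_gt0 => i; rewrite expn_gt0; case: (a i) => //.
  have hP : 0 < INR (\prod_(i <- index_enum I) (a i)`!)%nat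
    by apply: INR_pos; rewrite prodn_gt0.
  have hF : 0 < INR n`! by apply: INR_pos; apply: fact_gt0.
  have hN : 0 < INR (n ^ n)%nat by apply: INR_pos; rewrite expn_gt0; lia.
  have := ln_le _ _ (Rmult_lt_0_compat _ _ hF hQ) h.
  rewrite !ln_mult // ln_INR_prod; last by move=> i; rewrite expn_gt0; case: (a i).
  rewrite ln_INR_prod // INR_expn ln_pow //.
  have -> : \big[Rplus/0]_(i <- index_enum I) ln (INR (a i ^ a i)%nat) = K.
    apply: eq_bigr => i _; rewrite INR_expn.
    case: (posnP (a i)) => [->|hai]; first by rewrite /= ln_1 Rmult_0_l.
    by rewrite ln_pow //; apply: INR_pos.
  rewrite hHn hS2 /Lf; lra.
- pose E := \big[Rplus/0]_(i | i != i0) ee (a i).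
  have hA : (a i0 <= n)%nat by rewrite -hsum (bigD1 i0) //=; lia.
  have h2a : forall i, i != i0 -> (2 * a i <= n)%nat.
    move=> i hi; have := hsum; rewrite (bigD1 i0) //= (bigD1 i) //=.
    have := hmax i; lia.
  have hU0 : forall i, (a i <= n)%nat -> 0 <= U i.
    move=> i hi; rewrite /U.
    case: (posnP (a i)) => [->|hai]; first by rewrite /= !Rmult_0_l; lra.
    have hx : 0 < INR (a i) by apply: INR_pos.
    have : ln (INR (a i)) <= ln (INR n) by apply: ln_le => //; apply: le_INR; apply/leP.
    move=> h; have := Rmult_le_compat_l _ _ _ (Rlt_le _ _ hx) h; lra.
  have hE : ln (INR n) * E <= 40 * (INR n * S).
    have eU : \big[Rplus/0]_i U i = U i0 + \big[Rplus/0]_(i | i != i0) U i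
      by rewrite (bigD1 i0).
    rewrite /E -sumR_scal hS eU Rmult_plus_distr_l.
    have := hU0 i0 hA.
    have : \big[Rplus/0]_(i | i != i0) (ln (INR n) * ee (a i))
          <= 40 * \big[Rplus/0]_(i | i != i0) U i.
      rewrite -sumR_scal; apply: sumR_le => i hi.
      case: (posnP (a i)) => [hai|hai].
        by rewrite /ee /U hai /= !Rmult_0_l; lra.
      have := term_bound _ _ hai (h2a i hi); rewrite /U; lra.
    lra.
  have hE' : INR n * S - Hn <= E.
    rewrite hS2 hHn /K (bigD1 i0) //= (bigD1 i0 (F := fun i => Lf (a i))) //=.
    have hN : INR n = INR (a i0) + \big[Rplus/0]_(i | i != i0) INR (a i).
      by rewrite -hsumR (bigD1 i0).
    have hr := rr_mono (a i0) (n - a i0).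
    rewrite subnKC // /rr in hr.
    have hL : \big[Rplus/0]_(i | i != i0) Lf (a i) <=
       \big[Rplus/0]_(i | i != i0) (INR (a i) * ln (INR (a i)) - INR (a i) + ee (a i)).
      by apply: sumR_le => i _; apply: Lf_upper.
    rewrite sumR_add sumR_sub in hL.
    rewrite -/E in hL.
    lra.
  have hlnpos : 0 < ln (INR n) by lra.
  apply: (Rle_trans _ _ _ hE').
  apply: (Rmult_le_reg_l (ln (INR n))) => //.
  have -> : ln (INR n) * (40 / ln (INR n) * (INR n * S)) = 40 * (INR n * S)
    by field; lra.
  exact: hE.
Qed.
Close Scope R_scope.

Lemma counts_sum (gT : finGroupType) (G : {group gT}) (n : nat)
  (chi : 'I_n -> Iirr G) : (\sum_i counts chi i)%nat = n.
Proof.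
have h : forall i, counts chi i = (\sum_(j | chi j == i) 1)%nat.
  by move=> i; rewrite /counts -sum1_card; apply: eq_bigl => j; rewrite inE.
rewrite (eq_bigr _ (fun i _ => h i)).
under eq_bigr do rewrite big_mkcond.
rewrite exchange_big /=.
rewrite (eq_bigr (fun _ => 1%nat)); first by rewrite sum1_card card_ord.
move=> j _; rewrite -big_mkcond (eq_bigl (fun i => i == chi j)); first by rewrite big_pred1_eq.
by move=> i; rewrite eq_sym.
Qed.

Theorem lemma5p1 :
  exists C : R,
  forall (gT : finGroupType) (G : {group gT}) (n : nat),
    abelian G -> #|G| = n -> (3 <= n)%N ->
    forall chi : 'I_n -> Iirr G,
      (/ (ln (INR n)) ^ 100 <= Hent chi)%R ->
      (Rabs (Hent chi - Sent chi)
         <= C * (ln (ln (INR n)) / ln (INR n)) * Sent chi)%R.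
Proof.
Open Scope R_scope.
exists (40 / ln (ln 3)).
move=> gT G n _ _ hn chi hH.
have hn0 : (0 < n)%nat by lia.
pose j0 : 'I_n := Ordinal hn0.
pose a := counts chi.
have [i0 _ hmax] := @arg_maxnP _ (chi j0) predT a isT.
have hm : forall i, (a i <= a i0)%nat by move=> i; apply: hmax.
have [h1 h2] := @main_bound _ a n i0 hn (@counts_sum _ _ _ chi) hm.
have eH : Hent chi = / INR n * ln (INR (n`! %/ \prod_i (a i)`!)%nat) by [].
have eS : Sent chi = \big[Rplus/0]_i (if a i == 0%nat then 0
              else INR (a i) / INR n * ln (INR n / INR (a i))) by [].
rewrite -eS in h1 h2.
set H := Hent chi in hH h1 h2 eH *.
set S := Sent chi in h1 h2 eS *.
have hnR : 0 < INR n by apply: INR_pos.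
have h3 : 3 <= INR n by have h := le_INR 3 n (elimT leP hn); simpl in h; lra.
have hln3 := ln3_gt1.
have hlnn : ln 3 <= ln (INR n) by apply: ln_le; lra.
have hll : ln (ln 3) <= ln (ln (INR n)) by apply: ln_le; lra.
have hll0 : 0 < ln (ln 3) by rewrite -ln_1; apply: ln_increasing; lra.
have hlnpos : 0 < ln (INR n) by lra.
have hHpos : 0 < H.
  apply: Rlt_le_trans hH; apply: Rinv_0_lt_compat; apply: pow_lt; lra.
have hHn : ln (INR (n`! %/ \prod_i (a i)`!)%nat) = INR n * H.
  rewrite eH; field; lra.
rewrite hHn in h1 h2.
have hHS : H <= S by apply: (Rmult_le_reg_l (INR n)).
rewrite Rabs_left1; last lra.
have h4 : S - H <= 40 / ln (INR n) * S.
  apply: (Rmult_le_reg_l (INR n)) => //.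
  have -> : INR n * (S - H) = INR n * S - INR n * H by ring.
  have -> : INR n * (40 / ln (INR n) * S) = 40 / ln (INR n) * (INR n * S) by ring.
  exact: h2.
have h5 : 40 / ln (INR n) * S <= 40 / ln (ln 3) * (ln (ln (INR n)) / ln (INR n)) * S.
  have -> : 40 / ln (ln 3) * (ln (ln (INR n)) / ln (INR n)) * S
          = (40 / ln (INR n) * S) * (ln (ln (INR n)) / ln (ln 3)) by field; lra.
  rewrite -{1}(Rmult_1_r (40 / ln (INR n) * S)).
  apply: Rmult_le_compat_l.
    apply: Rmult_le_pos; last lra.
    apply: Rlt_le; apply: Rdiv_lt_0_compat; lra.
  apply: (Rmult_le_reg_l (ln (ln 3))) => //.
  have -> : ln (ln 3) * (ln (ln (INR n)) / ln (ln 3)) = ln (ln (INR n)) by field; lra.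
  lra.
lra.
Qed.
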